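(* $\mathfrak{P}_4=\mathfrak{S}_4$. That is, for a real vector $(c_\lambda)_{\lambda\vdash 4}$, the symmetric quartic $\sum_{\lambda\vdash 4}c_\lambda p^{(n)}_\lambda$ is nonnegative on $\mathbb{R}^n$ for every $n\ge 4$ if and only if it is a sum of squares of real forms for every $n\ge 4$.
   Context: For $n\ge 1$, $i\ge1$ let $p_i^{(n)}=\frac1n(x_1^i+\dots+x_n^i)$, and for a partition $\lambda=(\lambda_1,\dots,\lambda_l)$ of $4$ let $p^{(n)}_\lambda=\prod_i p^{(n)}_{\lambda_i}$. The partitions of $4$ are $(4),(3,1),(2,2),(2,1,1),(1,1,1,1)$. $\mathfrak{P}_4$ (resp. $\mathfrak{S}_4$) is the set of $(c_\lambda)\in\mathbb{R}^5$ such that $\sum_\lambda c_\lambda p^{(n)}_\lambda$ is nonnegative (resp. a sum of squares) for all $n\ge 4$. *)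

(* Defs.v *)
From HB Require Import structures.
From mathcomp Require Import all_boot all_order all_algebra.
From mathcomp Require Import reals.
From mathcomp Require Import mpoly.
Set Implicit Arguments. Unset Strict Implicit. Unset Printing Implicit Defensive.
Import Order.TTheory GRing.Theory Num.Theory.
Local Open Scope ring_scope.

Definition psum (R : realType) (n i : nat) : {mpoly R[n]} :=
  n%:R^-1 *: \sum_(j < n) 'X_j ^+ i.

(* the symmetric quartic  sum_{lambda |- 4} c_lambda p^(n)_lambda, where
   c 0 = c_(4), c 1 = c_(3,1), c 2 = c_(2,2), c 3 = c_(2,1,1), c 4 = c_(1,1,1,1) *)
Definition quartic (R : realType) (c : 'I_5 -> R) (n : nat) : {mpoly R[n]} :=
  c (inord 0) *: psum R n 4
  + c (inord 1) *: (psum R n 3 * psum R n 1)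
  + c (inord 2) *: (psum R n 2 ^+ 2)
  + c (inord 3) *: (psum R n 2 * psum R n 1 ^+ 2)
  + c (inord 4) *: (psum R n 1 ^+ 4).

Definition nonneg_poly (R : realType) (n : nat) (f : {mpoly R[n]}) : Prop :=
  forall x : 'I_n -> R, 0 <= f.@[x].

(* sum of squares of real forms (the squared forms are homogeneous
   polynomials of degree 2, the only possible degree for a quartic) *)
Definition sos_forms (R : realType) (n : nat) (f : {mpoly R[n]}) : Prop :=
  exists s : seq {mpoly R[n]},
    all (fun q => q \is 2.-homog) s /\ f = \sum_(q <- s) q ^+ 2.

Definition inP4 (R : realType) (c : 'I_5 -> R) : Prop :=
  forall n : nat, (4 <= n)%N -> nonneg_poly (quartic c n).

Definition inS4 (R : realType) (c : 'I_5 -> R) : Prop :=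
  forall n : nat, (4 <= n)%N -> sos_forms (quartic c n).

(* Main.v *)
Set Warnings "-all".
Require Import Defs.
From HB Require Import structures.
From mathcomp Require Import all_boot all_order all_algebra.
From mathcomp Require Import reals.
From mathcomp Require Import mpoly.
From mathcomp Require Import ring lra.
Set Implicit Arguments. Unset Strict Implicit. Unset Printing Implicit Defensive.
Import Order.TTheory GRing.Theory Num.Theory.
Local Open Scope ring_scope.


Section RingId.
Variable A : comRingType.
Variable n : nat.
Variable X : 'I_n -> A.
Variable nu : A.
Hypothesis Hnu : nu * n%:R = 1.

Let m := nu * \sum_(j < n) X j.
Let y j := X j - m.
Let Q k := nu * \sum_(j < n) y j ^+ k.

Lemma sumy0 : \sum_(j < n) y j = 0.
Proof.
rewrite /y sumrB sumr_const card_ord /m -mulr_natl mulrA (mulrC _ nu) Hnu mul1r.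
by rewrite subrr.
Qed.

Lemma sum_const (c : A) : \sum_(j < n) c = n%:R * c.
Proof. by rewrite sumr_const card_ord mulr_natl. Qed.

Lemma P_expand (i : nat) (F : A -> A) :
  (forall z, (m + z) ^+ i = F z) ->
  \sum_(j < n) X j ^+ i = \sum_(j < n) F (y j).
Proof.
move=> HF; apply: eq_bigr => j _; rewrite -HF /y; congr (_ ^+ _); ring.
Qed.

Lemma P1 : nu * \sum_(j < n) X j ^+ 1 = m.
Proof. by under eq_bigr do rewrite expr1. Qed.

Lemma P2 : nu * \sum_(j < n) X j ^+ 2 = m ^+ 2 + Q 2.
Proof.
rewrite (@P_expand 2 (fun z => m ^+ 2 + 2%:R * m * z + z ^+ 2)); last by move=> z; ring.
rewrite !big_split /= sum_const -!mulr_sumr sumy0 /Q.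
have -> : nu * (n%:R * m ^+ 2 + 2%:R * m * 0 + \sum_(i < n) y i ^+ 2)
   = (nu * n%:R) * m ^+ 2 + nu * \sum_(i < n) y i ^+ 2 by ring.
by rewrite Hnu mul1r.
Qed.

Lemma P3 : nu * \sum_(j < n) X j ^+ 3 = m ^+ 3 + 3%:R * m * Q 2 + Q 3.
Proof.
rewrite (@P_expand 3 (fun z => m ^+ 3 + 3%:R * m ^+ 2 * z + 3%:R * m * z ^+ 2 + z ^+ 3)); last by move=> z; ring.
rewrite !big_split /= sum_const -!mulr_sumr sumy0 /Q.
have -> : forall a b : A, nu * (n%:R * m ^+ 3 + 3%:R * m ^+ 2 * 0 + 3%:R * m * a + b)
   = (nu * n%:R) * m ^+ 3 + 3%:R * m * (nu * a) + nu * b by move=> *; ring.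
by rewrite Hnu mul1r.
Qed.

Lemma P4 : nu * \sum_(j < n) X j ^+ 4 = m ^+ 4 + 6%:R * m ^+ 2 * Q 2 + 4%:R * m * Q 3 + Q 4.
Proof.
rewrite (@P_expand 4 (fun z => m ^+ 4 + 4%:R * m ^+ 3 * z + 6%:R * m ^+ 2 * z ^+ 2 + 4%:R * m * z ^+ 3 + z ^+ 4)); last by move=> z; ring.
rewrite !big_split /= sum_const -!mulr_sumr sumy0 /Q.
have -> : forall a b c : A, nu * (n%:R * m ^+ 4 + 4%:R * m ^+ 3 * 0 + 6%:R * m ^+ 2 * a + 4%:R * m * b + c)
   = (nu * n%:R) * m ^+ 4 + 6%:R * m ^+ 2 * (nu * a) + 4%:R * m * (nu * b) + nu * c by move=> *; ring.
by rewrite Hnu mul1r.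
Qed.

Lemma Gsum (k : A) :
  nu * \sum_(j < n) (y j ^+ 2 + k * m * y j - Q 2) ^+ 2
  = Q 4 + 2%:R * k * m * Q 3 + k ^+ 2 * m ^+ 2 * Q 2 - Q 2 ^+ 2.
Proof.
have E : forall z, (z ^+ 2 + k * m * z - Q 2) ^+ 2 =
   z ^+ 4 + 2%:R * k * m * z ^+ 3 + (k ^+ 2 * m ^+ 2 - 2%:R * Q 2) * z ^+ 2
   + (- 2%:R * k * m * Q 2) * z + Q 2 ^+ 2 by move=> z; ring.
under eq_bigr do rewrite E.
rewrite !big_split /= sum_const -!mulr_sumr sumy0 /Q.
set S2 := \sum_(i < n) y i ^+ 2; set S3 := \sum_(i < n) y i ^+ 3; set S4 := \sum_(i < n) y i ^+ 4.
have -> : nu * (S4 + 2%:R * k * m * S3 + (k ^+ 2 * m ^+ 2 - 2%:R * (nu * S2)) * S2 +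
   - 2%:R * k * m * (nu * S2) * 0 + n%:R * (nu * S2) ^+ 2)
  = nu * S4 + 2%:R * k * m * (nu * S3) + k ^+ 2 * m ^+ 2 * (nu * S2) - 2%:R * (nu * S2) ^+ 2
    + (nu * n%:R) * (nu * S2) ^+ 2 by ring.
rewrite Hnu; ring.
Qed.

Lemma core (c0 c1 c2 c3 c4 k : A) :
  4%:R * c0 + c1 = 2%:R * c0 * k ->
  c0 * (nu * \sum_(j < n) X j ^+ 4)
  + c1 * ((nu * \sum_(j < n) X j ^+ 3) * (nu * \sum_(j < n) X j ^+ 1))
  + c2 * (nu * \sum_(j < n) X j ^+ 2) ^+ 2
  + c3 * ((nu * \sum_(j < n) X j ^+ 2) * (nu * \sum_(j < n) X j ^+ 1) ^+ 2)
  + c4 * (nu * \sum_(j < n) X j ^+ 1) ^+ 4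
  = c0 * (nu * \sum_(j < n) (y j ^+ 2 + k * m * y j - Q 2) ^+ 2)
    + (c0 + c1 + c2 + c3 + c4) * m ^+ 4
    + ((6%:R * c0 + 3%:R * c1 + 2%:R * c2 + c3) - c0 * k ^+ 2) * m ^+ 2 * Q 2
    + (c0 + c2) * Q 2 ^+ 2.
Proof.
move=> Hk; rewrite Gsum P1 P2 P3 P4.
have -> : c1 = 2%:R * c0 * k - 4%:R * c0 by rewrite -Hk; ring.
ring.
Qed.
End RingId.


Lemma poly_bound (R : realType) (q : {poly R}) :
  exists K, forall t : R, 0 <= t <= 1 -> `|q.[t]| <= K.
Proof.
elim/poly_ind: q => [|p c [K HK]].
  by exists 0 => t _; rewrite horner0 normr0.
exists (K + `|c|) => t /andP[t0 t1].
rewrite hornerMXaddC.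
apply: le_trans (ler_normD _ _) _; rewrite lerD2r normrM.
have := HK t; rewrite t0 t1 => /(_ isT) Hp.
have Ht : `|t| <= 1 by rewrite ger0_norm.
have Hp0 : 0 <= `|p.[t]| by [].
apply: le_trans Hp; rewrite -[X in _ <= X]mulr1; exact: ler_wpM2l.
Qed.

Lemma dens (R : realType) (p : {poly R}) :
  (forall n k : nat, (4 <= n)%N -> (k <= n)%N -> 0 <= p.[k%:R / n%:R]) ->
  forall t : R, 0 <= t <= 1 -> 0 <= p.[t].
Proof.
move=> H t /andP[t0 t1]; rewrite leNgt; apply/negP => Hlt.
have : root (p - p.[t]%:P) t by rewrite /root hornerD hornerN hornerC subrr.
case/factor_theorem => q Hq.
have [K HK] := poly_bound q.
set e := - p.[t].
have e0 : 0 < e by rewrite /e oppr_gt0.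
set K' := `|K| + 1.
have K'0 : 0 < K' by rewrite /K'; apply: ltr_pwDr => //.
set N := (Num.trunc (K' / e) + 4)%N.
have N4 : (4 <= N)%N by rewrite /N leq_addl.
have N0 : (0 < N%:R :> R) by rewrite ltr0n; apply: leq_trans N4.
have HN : K' / e < N%:R.
  rewrite /N natrD; apply: lt_le_trans (truncnS_gt _) _.
  by rewrite -natr1 lerD2l ler1n.
set k := Num.trunc (N%:R * t).
have Nt0 : 0 <= N%:R * t by apply: mulr_ge0 => //; exact: ltW.
have [kle klt] := andP (truncn_itv Nt0).
have kN : (k <= N)%N.
  rewrite -(ler_nat R); apply: le_trans kle _.
  by rewrite -[X in _ <= X]mulr1; apply: ler_wpM2l => //; exact: ltW.
have := H N k N4 kN.
set s := k%:R / N%:R.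
have s0 : 0 <= s by rewrite /s divr_ge0.
have s1 : s <= 1 by rewrite /s ler_pdivrMr // mul1r ler_nat.
have ds : `|s - t| <= N%:R^-1.
  have E : s - t = (k%:R - N%:R * t) * N%:R^-1.
    by rewrite /s; field; rewrite gt_eqF.
  have Ni : 0 <= N%:R^-1 :> R by rewrite invr_ge0 ltW.
  rewrite E normrM (ger0_norm Ni) -[X in _ <= X]mul1r.
  apply: ler_wpM2r => //.
  rewrite -/k in kle klt; rewrite -natr1 in klt.
  rewrite ler_norml; apply/andP; split; lra.
have Hps : p.[s] = p.[t] + q.[s] * (s - t).
  have : (p - p.[t]%:P).[s] = (q * ('X - t%:P)).[s] by rewrite Hq.
  rewrite hornerD hornerN hornerC hornerM hornerD hornerN hornerX hornerC.
  by move=> <-; ring.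
rewrite Hps.
have Hq' : q.[s] * (s - t) <= K' * N%:R^-1.
  apply: le_trans (ler_norm _) _; rewrite normrM.
  apply: ler_pM => //.
  apply: le_trans (HK s _) _; first by rewrite s0 s1.
  by rewrite /K' (le_trans (ler_norm K)) // lerDl.
have HKe : K' * N%:R^-1 < e.
  by rewrite ltr_pdivrMr // mulrC -ltr_pdivrMr.
rewrite leNgt => /negP; apply.
rewrite -(opprK p.[t]) -/e.
lra.
Qed.


Lemma sum_two (R : realType) (n k : nat) (a b : R) : (k <= n)%N ->
  \sum_(j < n) (if (j < k)%N then a else b) = k%:R * a + (n - k)%:R * b.
Proof.
move=> kn.
rewrite -(big_mkord xpredT (fun j => if (j < k)%N then a else b)).
rewrite (big_cat_nat (leq0n k) kn) /=.
rewrite (@eq_big_nat _ _ _ 0 k _ (fun=> a)); last by move=> i /andP[_ ->].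
rewrite (@eq_big_nat _ _ _ k n _ (fun=> b)); last by move=> i /andP[H _]; rewrite ltnNge H.
by rewrite !sumr_const_nat subn0 !mulr_natl.
Qed.

Lemma mevalXn (R : realType) (n : nat) (v : 'I_n -> R) (p : {mpoly R[n]}) (i : nat) :
  (p ^+ i).@[v] = p.@[v] ^+ i.
Proof.
elim: i => [|i IH]; first by rewrite !expr0 meval1.
by rewrite !exprS mevalM IH.
Qed.

Definition Pp (R : realType) (a b : R) (i : nat) : {poly R} :=
  (b ^+ i)%:P + (a ^+ i - b ^+ i) *: 'X.

Definition Gp (R : realType) (c : 'I_5 -> R) (a b : R) : {poly R} :=
  c (inord 0) *: Pp a b 4 + c (inord 1) *: (Pp a b 3 * Pp a b 1)
  + c (inord 2) *: (Pp a b 2 ^+ 2) + c (inord 3) *: (Pp a b 2 * Pp a b 1 ^+ 2)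
  + c (inord 4) *: (Pp a b 1 ^+ 4).

Lemma psum_two (R : realType) (n k i : nat) (a b : R) : (0 < n)%N -> (k <= n)%N ->
  (psum R n i).@[fun j : 'I_n => if (j < k)%N then a else b]
  = (Pp a b i).[k%:R / n%:R].
Proof.
move=> n0 kn.
rewrite /psum mevalZ raddf_sum /=.

rewrite (eq_bigr (fun j : 'I_n => if (j < k)%N then a ^+ i else b ^+ i)); last first.
  move=> j _; rewrite mevalXn mevalXU; by case: ifP.
rewrite (sum_two _ _ kn) /Pp hornerD hornerC hornerZ hornerX natrB //.
have nz : n%:R != 0 :> R by rewrite pnatr_eq0 -lt0n.
field.
done.
Qed.

Lemma quartic_two (R : realType) (c : 'I_5 -> R) (n k : nat) (a b : R) :
  (0 < n)%N -> (k <= n)%N ->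
  (quartic c n).@[fun j : 'I_n => if (j < k)%N then a else b]
  = (Gp c a b).[k%:R / n%:R].
Proof.
move=> n0 kn.
rewrite /quartic /Gp !mevalD !(mevalZ _ (c _)) !mevalM !psum_two //.
by rewrite !hornerE.
Qed.


Section Alg.
Variable R : realType.
Variables c0 c1 c2 c3 c4 : R.
Let Pi (a b t : R) (i : nat) := b ^+ i + (a ^+ i - b ^+ i) * t.
Let g a b t := c0 * Pi a b t 4 + c1 * (Pi a b t 3 * Pi a b t 1) + c2 * (Pi a b t 2) ^+ 2
   + c3 * (Pi a b t 2 * Pi a b t 1 ^+ 2) + c4 * Pi a b t 1 ^+ 4.
Let al := c0 + c1 + c2 + c3 + c4.
Let be := 6%:R * c0 + 3%:R * c1 + 2%:R * c2 + c3.
Let ga := 4%:R * c0 + c1.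
Let CC := c0 + c2.
Let Phi m w s := c0 * s * w ^+ 2 + ga * s * w * m + be * s * m ^+ 2 + CC * s ^+ 2 + al * m ^+ 4.

Lemma g_ident a b t :
  g a b t = Phi (b + t * (a - b)) ((1 - t) * (a - b) - t * (a - b)) (t * (a - b) * ((1 - t) * (a - b))).
Proof. rewrite /g /Phi /Pi /al /be /ga /CC; ring. Qed.

Hypothesis Hg : forall a b t, 0 <= t <= 1 -> 0 <= g a b t.

Lemma al_ge0 : 0 <= al.
Proof.
have := Hg 1 1 (t:=1); rewrite ler01 lexx => /(_ isT).
by rewrite /g /Pi !expr1n subrr !mul0r !addr0 !mul1r !mulr1 !expr1n !mulr1.
Qed.

Lemma PhiQ m w s : 0 < s -> 0 <= Phi m w s.
Proof.
move=> s0.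
set r := Num.sqrt (w ^+ 2 + 4%:R * s).
have r2 : r ^+ 2 = w ^+ 2 + 4%:R * s by rewrite sqr_sqrtr //; nra.
have r0 : 0 < r by rewrite sqrtr_gt0; nra.
have rw : w <= r by nra.
have rw' : - w <= r by nra.
set t := (r - w) / (2%:R * r).
have tr : t * r = (r - w) / 2%:R by rewrite /t; field; rewrite gt_eqF.
have t0 : 0 <= t by rewrite /t divr_ge0 //; nra.
have t1 : t <= 1 by rewrite /t ler_pdivrMr; nra.
have := Hg (m - t * r + r) (m - t * r) (t:=t); rewrite t0 t1 => /(_ isT).
rewrite g_ident.
have -> : m - t * r + r - (m - t * r) = r by ring.
have -> : m - t * r + t * r = m by ring.
have -> : (1 - t) * r - t * r = w.
  have -> : (1 - t) * r - t * r = r - 2%:R * (t * r) by ring.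
  by rewrite tr; field.

have -> : t * r * ((1 - t) * r) = s.
  have -> : t * r * ((1 - t) * r) = (t * r) * (r - t * r) by ring.
  rewrite tr.
  have -> : (r - w) / 2%:R * (r - (r - w) / 2%:R) = (r ^+ 2 - w ^+ 2) / 4%:R by field.
  by rewrite r2; field.
done.
Qed.

Lemma CC_ge0 : 0 <= CC.
Proof.
have := PhiQ 0 0 ltr01.
have -> : Phi 0 0 1 = CC by rewrite /Phi; ring.
done.
Qed.

Lemma c0_ge0 : 0 <= c0.
Proof.
rewrite leNgt; apply/negP => c0n.
have HC := CC_ge0.
set w := 1 + CC / (- c0).
have w1 : 1 <= w by rewrite /w lerDl divr_ge0 // oppr_ge0 ltW.
have cw : c0 * w = c0 - CC.
  by rewrite /w; field; rewrite lt_eqF.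
have := PhiQ 0 w ltr01.
have -> : Phi 0 w 1 = c0 * w ^+ 2 + CC by rewrite /Phi; ring.
have : c0 * w ^+ 2 <= c0 * w.
  rewrite expr2 mulrA; have := ler_wnM2l (ltW c0n) w1; nra.
lra.
Qed.

Lemma ga0 : c0 = 0 -> ga = 0.
Proof.
move=> c00; apply/eqP; apply/negPn/negP => gn.
set K := be + CC + al.
set w := - (`|K| + 1) / ga.
have gw : ga * w = - (`|K| + 1) by rewrite /w; field.
have := PhiQ 1 w ltr01.
have -> : Phi 1 w 1 = c0 * w ^+ 2 + ga * w + K by rewrite /Phi /K; ring.
rewrite c00 gw.
have := ler_norm K.
lra.
Qed.

Lemma conds : exists k, [/\ ga = 2%:R * c0 * k, 0 <= c0, 0 <= al, 0 <= CC &
  ((0 <= be - c0 * k ^+ 2) \/ ((0 < al) /\ ((be - c0 * k ^+ 2) ^+ 2 <= 4%:R * al * CC)))].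
Proof.
have H0 := c0_ge0; have Hal := al_ge0; have HC := CC_ge0.
pose k := if c0 == 0 then 0 else ga / (2%:R * c0).
have Hk : ga = 2%:R * c0 * k.
  rewrite /k; case: eqP => [c00|/eqP nz]; first by rewrite (ga0 c00) mulr0.
  by field.
exists k; split => //.
set B := be - c0 * k ^+ 2.
have Hq : forall s, 0 < s -> 0 <= al + B * s + CC * s ^+ 2.
  move=> s s0; have := PhiQ 1 (- k) s0.
  have -> : Phi 1 (- k) s = al + B * s + CC * s ^+ 2 by rewrite /Phi /B Hk; ring.
  done.
case: (lerP 0 B) => HB; [by left | right].
case: (ltrP 0 CC) => HC'.
  have s0 : 0 < - B / (2%:R * CC) by rewrite divr_gt0 // ?oppr_gt0 // mulr_gt0.
  have := Hq _ s0.
  have -> : al + B * (- B / (2%:R * CC)) + CC * (- B / (2%:R * CC)) ^+ 2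
     = (4%:R * al * CC - B ^+ 2) / (4%:R * CC) by field; rewrite gt_eqF.
  move=> HH.
  have D0 : 0 < 4%:R * CC by rewrite mulr_gt0.
  have HX : 0 <= 4%:R * al * CC - B ^+ 2.
    by have := mulr_ge0 HH (ltW D0); rewrite divfK // gt_eqF.
  split; last by lra.
  have : 0 < B ^+ 2 by rewrite exprn_even_gt0 //= lt_eqF.
  nra.
have C0 : CC = 0 by lra.
have s0 : 0 < (al + 1) / (- B) by rewrite divr_gt0 ?oppr_gt0 //; lra.
have := Hq _ s0.
have -> : al + B * ((al + 1) / - B) + CC * ((al + 1) / - B) ^+ 2 = -1.
  by rewrite C0; field; rewrite lt_eqF.
lra.
Qed.
End Alg.

Lemma sqMP (R : realType) (n : nat) (r : R) (p : {mpoly R[n]}) :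
  (r%:MP * p) ^+ 2 = (r ^+ 2)%:MP * p ^+ 2.
Proof. by rewrite !expr2 mpolyCM; ring. Qed.

Lemma homC (R : realType) (n d : nat) (r : R) (p : {mpoly R[n]}) :
  p \is d.-homog -> r%:MP * p \is d.-homog.
Proof. by move=> H; rewrite mul_mpolyC dhomogZ. Qed.

Lemma homM11 (R : realType) (n : nat) (p q : {mpoly R[n]}) :
  p \is 1.-homog -> q \is 1.-homog -> p * q \is 2.-homog.
Proof. by move=> hp hq; have := dhomogM hp hq. Qed.

Theorem theorem1p3 (R : realType) (c : 'I_5 -> R) : inP4 c <-> inS4 c.
Proof.
split; last first.
  move=> H n n4 x; have [s [_ ->]] := H n n4.
  rewrite raddf_sum /=; apply: sumr_ge0 => q _; rewrite mevalXn; exact: sqr_ge0.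
move=> H.
have Hg : forall a b t : R, 0 <= t <= 1 ->
  0 <= c (inord 0) * (b ^+ 4 + (a ^+ 4 - b ^+ 4) * t)
     + c (inord 1) * ((b ^+ 3 + (a ^+ 3 - b ^+ 3) * t) * (b ^+ 1 + (a ^+ 1 - b ^+ 1) * t))
     + c (inord 2) * (b ^+ 2 + (a ^+ 2 - b ^+ 2) * t) ^+ 2
     + c (inord 3) * ((b ^+ 2 + (a ^+ 2 - b ^+ 2) * t) * (b ^+ 1 + (a ^+ 1 - b ^+ 1) * t) ^+ 2)
     + c (inord 4) * (b ^+ 1 + (a ^+ 1 - b ^+ 1) * t) ^+ 4.
  move=> a b t Ht.
  have := @dens R (Gp c a b) _ t Ht.
  have -> : (Gp c a b).[t] = c (inord 0) * (b ^+ 4 + (a ^+ 4 - b ^+ 4) * t)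
     + c (inord 1) * ((b ^+ 3 + (a ^+ 3 - b ^+ 3) * t) * (b ^+ 1 + (a ^+ 1 - b ^+ 1) * t))
     + c (inord 2) * (b ^+ 2 + (a ^+ 2 - b ^+ 2) * t) ^+ 2
     + c (inord 3) * ((b ^+ 2 + (a ^+ 2 - b ^+ 2) * t) * (b ^+ 1 + (a ^+ 1 - b ^+ 1) * t) ^+ 2)
     + c (inord 4) * (b ^+ 1 + (a ^+ 1 - b ^+ 1) * t) ^+ 4.
    by rewrite /Gp /Pp !hornerE.
  apply=> n k n4 kn.
  rewrite -quartic_two //; first exact: H.
  exact: leq_trans n4.
have [k [Hk Hc0 Hal HC Hcase]] := conds Hg.
move=> n n4.
set c0 := c (inord 0) in Hk Hc0 Hal HC Hcase *.
set c1 := c (inord 1) in Hk Hc0 Hal HC Hcase *.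
set c2 := c (inord 2) in Hk Hc0 Hal HC Hcase *.
set c3 := c (inord 3) in Hk Hc0 Hal HC Hcase *.
set c4 := c (inord 4) in Hk Hc0 Hal HC Hcase *.
have n0 : (0 < n)%N by apply: leq_trans n4.
have nR : n%:R != 0 :> R by rewrite pnatr_eq0 -lt0n.
pose nu : {mpoly R[n]} := (n%:R^-1)%:MP.
have Hnu : nu * n%:R = 1 by rewrite /nu -mpolyC_nat -mpolyCM mulVf // rmorph1.
pose X := fun j : 'I_n => ('X_j : {mpoly R[n]}).
have Hk' : 4%:R * c0%:MP + c1%:MP = 2%:R * c0%:MP * k%:MP :> {mpoly R[n]}.
  by have := congr1 (@mpolyC n R) Hk; rewrite !rmorphD !rmorphM !rmorph_nat.
have Eq : quartic c n = c0%:MP * (nu * \sum_(j < n) X j ^+ 4) +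
  c1%:MP * (nu * (\sum_(j < n) X j ^+ 3) * (nu * \sum_(j < n) X j ^+ 1)) +
  c2%:MP * (nu * \sum_(j < n) X j ^+ 2) ^+ 2 +
  c3%:MP * (nu * (\sum_(j < n) X j ^+ 2) * (nu * \sum_(j < n) X j ^+ 1) ^+ 2) +
  c4%:MP * (nu * \sum_(j < n) X j ^+ 1) ^+ 4.
  by rewrite /quartic /psum !mul_mpolyC.
rewrite Eq (core X Hnu c2%:MP c3%:MP c4%:MP Hk') /=.
have -> : c0%:MP + c1%:MP + c2%:MP + c3%:MP + c4%:MP = (c0 + c1 + c2 + c3 + c4)%:MP :> {mpoly R[n]}
  by rewrite !rmorphD.
have -> : 6%:R * c0%:MP + 3%:R * c1%:MP + 2%:R * c2%:MP + c3%:MP - c0%:MP * k%:MP ^+ 2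
   = (6%:R * c0 + 3%:R * c1 + 2%:R * c2 + c3 - c0 * k ^+ 2)%:MP :> {mpoly R[n]}
  by rewrite !expr2 rmorphB !rmorphD !rmorphM !rmorph_nat.
have -> : c0%:MP + c2%:MP = (c0 + c2)%:MP :> {mpoly R[n]} by rewrite rmorphD.
set al := c0 + c1 + c2 + c3 + c4 in Hal Hcase *.
set B := 6%:R * c0 + 3%:R * c1 + 2%:R * c2 + c3 - c0 * k ^+ 2 in Hcase *.
set CC := c0 + c2 in HC Hcase *.
set m := nu * \sum_(j0 < n) X j0.
set Q2 := nu * \sum_(j0 < n) (X j0 - m) ^+ 2.
pose G := fun j => (X j - m) ^+ 2 + k%:MP * m * (X j - m) - Q2.
have hX : forall j, X j \is 1.-homog.
  move=> i; rewrite /X dhomogX; apply/eqP; exact: mdeg1.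
have hm : m \is 1.-homog by rewrite /m /nu; apply: homC; apply: rpred_sum => j _; exact: hX.
have hy : forall j, X j - m \is 1.-homog by move=> j; apply: rpredB.
have hQ2 : Q2 \is 2.-homog.
  rewrite /Q2 /nu; apply: homC; apply: rpred_sum => j _; rewrite expr2; exact: homM11.
have hG : forall j, G j \is 2.-homog.
  move=> j; rewrite /G; apply: rpredB => //; apply: rpredD.
    by rewrite expr2; exact: homM11.
  by rewrite -mulrA; apply: homC; exact: homM11.
have hm2 : m ^+ 2 \is 2.-homog by rewrite expr2; exact: homM11.
have c0n : 0 <= c0 / n%:R by rewrite divr_ge0.
have EG : \sum_(q <- [seq (Num.sqrt (c0 / n%:R))%:MP * G j | j <- index_enum 'I_n]) q ^+ 2
   = c0%:MP * (nu * \sum_(j < n) G j ^+ 2).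
  rewrite big_map; under eq_bigr do rewrite sqMP sqr_sqrtr //.
  by rewrite mulrA -mpolyCM -mulr_sumr.
have hGl : all (fun q => q \is 2.-homog) [seq (Num.sqrt (c0 / n%:R))%:MP * G j | j <- index_enum 'I_n].
  by apply/allP => q /mapP[j _ ->]; apply: homC.
case: Hcase => [HB | [Hal0 HB]].
  exists ([seq (Num.sqrt (c0 / n%:R))%:MP * G j | j <- index_enum 'I_n] ++
     [:: (Num.sqrt al)%:MP * m ^+ 2; (Num.sqrt CC)%:MP * Q2] ++
     [seq (Num.sqrt (B / n%:R))%:MP * (m * (X j - m)) | j <- index_enum 'I_n]); split.
    rewrite !all_cat hGl /= (homC _ hm2) (homC _ hQ2) /=.
    by apply/allP => q /mapP[j _ ->]; apply: homC; exact: homM11.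
  rewrite !big_cat EG /= !big_cons big_nil big_map.
  have Bn : 0 <= B / n%:R by rewrite divr_ge0.
  have ES : \sum_(j < n) ((Num.sqrt (B / n%:R))%:MP * (m * (X j - m))) ^+ 2
      = B%:MP * m ^+ 2 * Q2.
    under eq_bigr do rewrite sqMP sqr_sqrtr // exprMn mulrA.
    by rewrite -mulr_sumr mpolyCM -/nu /Q2; ring.
  rewrite ES (sqMP (Num.sqrt al)) (sqMP (Num.sqrt CC)) !sqr_sqrtr // /G /Q2; ring.
exists ([seq (Num.sqrt (c0 / n%:R))%:MP * G j | j <- index_enum 'I_n] ++
     [:: (Num.sqrt al)%:MP * (m ^+ 2 + (B / (2%:R * al))%:MP * Q2);
         (Num.sqrt (CC - B ^+ 2 / (4%:R * al)))%:MP * Q2]); split.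
  rewrite !all_cat hGl /= (homC _ hQ2) !andbT; apply: homC.
  by apply: rpredD => //; exact: homC.
rewrite !big_cat EG /= !big_cons big_nil.
have d0 : 0 <= CC - B ^+ 2 / (4%:R * al).
  rewrite subr_ge0 ler_pdivrMr ?mulr_gt0 //; lra.
set e := B / (2%:R * al) in d0 *.
set d := CC - B ^+ 2 / (4%:R * al) in d0 *.
rewrite (sqMP (Num.sqrt al)) (sqMP (Num.sqrt d)) (sqr_sqrtr (ltW Hal0)) (sqr_sqrtr d0).
have EB : B = 2%:R * al * e by rewrite /e; field; rewrite gt_eqF.
have EC : CC = al * (e * e) + d by rewrite /d /e; field; rewrite gt_eqF.
clearbody e d al B CC.
rewrite EB EC !mpolyCD !mpolyCM mpolyC_nat /G /Q2.
ring.
Qed.
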